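(* Let $x(z)$ be a holomorphic function on an open set $\Omega\subset\mathbf{C}$ with $\ddot{x}=d^2x/dz^2$ not identically zero, and define the meromorphic function $f(z)=z+2\dot{x}(z)/\ddot{x}(z)$, where $\dot{x}=dx/dz$. If $g\in PSL(2,\mathbf{C})$, acting by Möbius transformation, satisfies $g(\Omega)=\Omega$ and $x(gz)=x(z)$, then $f$ is covariant under $g$: $f(g(z))=g(f(z))$.
   Context: In the paper, $x(z)$ is the inverse of the Schwarz map $S$ of the hypergeometric equation restricted to the upper half-plane, and $f=DS\circ S^{-1}$ is expressed as $f(z)=z+2\dot{x}/\ddot{x}$, where $DS$ is the derived Schwarz map. *)

(* Defs.v *)
(* with MathComp-Analysis; complex numbers = R[i] from
   mathcomp-real-closed, viewed as a numFieldType (hence a normed module over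
   itself, so [derivable f z 1] is complex differentiability). *)
From mathcomp Require Import all_boot all_order all_algebra.
From mathcomp Require Export complex.
From mathcomp Require Export all_classical all_reals all_analysis.
Export numFieldNormedType.Exports.
Set Implicit Arguments. Unset Strict Implicit. Unset Printing Implicit Defensive.
Import GRing.Theory Num.Theory.
Local Open Scope ring_scope.
Local Open Scope classical_set_scope.

Definition CC (R : realType) : numFieldType := R[i].

Definition holomorphic_on (R : realType) (O : set (CC R)) (f : CC R -> CC R) :=
  forall z, O z -> derivable f z 1.

(* An element of PSL(2,C), represented by a matrix [a b; c d] of SL(2,C)
   (both lifts ±g give the same Möbius transformation). *)
Definition SL2 (R : realType) (a b c d : CC R) := a * d - b * c = 1.

(* The Möbius action z |-> (a z + b)/(c z + d) at a finite point whose image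
   is finite (c z + d <> 0). *)
Definition mobius (R : realType) (a b c d : CC R) (z : CC R) : CC R :=
  (a * z + b) / (c * z + d).

Definition fDS (R : realType) (x : CC R -> CC R) (z : CC R) : CC R :=
  z + 2 * derive1 x z / derive1 (derive1 x) z.

(* Main.v *)
Require Import Defs.
From mathcomp Require Import all_boot all_order all_algebra.
From mathcomp Require Import all_classical all_reals all_analysis.
From mathcomp Require Import ring.
Import GRing.Theory Num.Theory.
Local Open Scope ring_scope.
Local Open Scope classical_set_scope.

Lemma derive1_compK (K : numFieldType) (f g : K -> K) x :
  derivable f x 1 -> derivable g (f x) 1 ->
  derivable (g \o f) x 1 /\
  derive1 (g \o f) x = derive1 g (f x) * derive1 f x.
Proof.
move=> /derivable1_diffP df /derivable1_diffP dg.
split; first by apply/derivable1_diffP; exact/differentiable_comp.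
rewrite derive1E'; last exact/differentiable_comp.
rewrite diff_comp // !derive1E' //= -[X in 'd  _ _ X = _]mulr1.
by rewrite [LHS]linearZ mulrC.
Qed.

Lemma chainC (R : realType) (f g : CC R -> CC R) (x : CC R) :
  derivable f x 1 -> derivable g (f x) 1 ->
  derive1 (g \o f) x = derive1 g (f x) * derive1 f x.
Proof. by move=> h1 h2; have [_ ->] := @derive1_compK _ f g x h1 h2. Qed.

Lemma lin_der (R : realType) (k m z : CC R) :
  is_derive z (1 : CC R) (fun u : CC R => k * u + m) k.
Proof.
have -> : (fun u : CC R => k * u + m) = (k *: (@id (CC R))) + cst m.
  by apply/funext => u.
have H1 : is_derive z (1 : CC R) (k *: (@id (CC R))) (k *: 1).
  exact: is_deriveZ.
have H2 := is_deriveD H1 (is_derive_cst m z 1).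
case: H2 => H2a H2b; apply: DeriveDef; first exact H2a.
rewrite H2b. by rewrite addr0 /= /GRing.scale /= mulr1.
Qed.

Lemma mob_der (R : realType) (a b c d : CC R) z :
  a * d - b * c = 1 -> c * z + d != 0 ->
  is_derive z 1 (mobius a b c d) ((c * z + d) ^-2).
Proof.
move=> h w0.
have e : mobius a b c d = (fun u => a * u + b) * (fun u => (c * u + d)^-1).
  by apply/funext => u.
rewrite e.
have d1 := @lin_der R a b z.
have d2 := @lin_der R c d z.
have d3 : is_derive z (1:CC R) (fun u => (c * u + d)^-1) (- (c*z+d)^-2 * c).
  have [dv2 Dv2] := d2.
  apply: DeriveDef; first by apply: derivableV.
  by rewrite deriveV // Dv2.
case: (is_deriveM d1 d3) => Ha Hb; apply: DeriveDef; first exact Ha.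
rewrite Hb /= /GRing.scale /=.
rewrite -[X in _ = X]mul1r -h.
by field.
Qed.

Lemma alg_id (R : realType) (a b c d z P Q : CC R) : a*d - b*c = 1 -> c*z+d != 0 -> Q != 0 -> 2*P*c + (c*z+d)*Q != 0 ->
  (a*z+b)/(c*z+d) + 2 * (P * (c*z+d)^+2) / ((c*z+d)^+3 * (2*P*c + (c*z+d)*Q)) = (a * (z + 2 * P / Q) + b) / (c * (z + 2 * P / Q) + d).
Proof.
move=> h w0 Q0 S0.
have e : c * (z + 2 * P / Q) + d = (2*P*c + (c*z+d)*Q) / Q by field.
rewrite e.
rewrite -[X in 2 * (P * X)]mul1r -h.
field; by rewrite h mul1r Q0 S0 w0.
Qed.

Lemma final_alg (R : realType) (a b c d z P Q P' Q' : CC R) :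
  a*d - b*c = 1 -> c*z+d != 0 ->
  P = P' / (c * z + d) ^+ 2 ->
  Q' / (c * z + d) ^+ 2 =
    P * ((c * z + d) * c + (c * z + d) * c) + (c * z + d) * (c * z + d) * Q ->
  Q' != 0 -> Q != 0 ->
  c * (z + 2 * P / Q) + d != 0 /\
  (a * z + b) / (c * z + d) + 2 * P' / Q' =
  (a * (z + 2 * P / Q) + b) / (c * (z + 2 * P / Q) + d).
Proof.
move=> h w0 HP HQ Q'0 Q0.
have eP : P' = P * (c*z+d)^+2 by rewrite HP; field.
have eQ : Q' = (c*z+d)^+3 * (2*P*c + (c*z+d)*Q).
  have -> : Q' = (Q' / (c*z+d)^+2) * (c*z+d)^+2 by field.
  rewrite HQ; ring.
have S0 : 2*P*c + (c*z+d)*Q != 0.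
  by move: Q'0; rewrite eQ mulf_eq0 negb_or => /andP[_ ?].
split.
  have -> : c * (z + 2 * P / Q) + d = (2*P*c + (c*z+d)*Q) / Q by field.
  by rewrite mulf_neq0 // invr_neq0.
by rewrite eP eQ; apply: alg_id.
Qed.

Theorem proposition3p1 (R : realType) (O : set (CC R)) (x : CC R -> CC R)
    (a b c d : CC R) :
  open O ->
  holomorphic_on O x ->
  holomorphic_on O (derive1 x) ->
  (exists z0, O z0 /\ derive1 (derive1 x) z0 != 0) ->
  SL2 a b c d ->
  (* g(Ω) = Ω, with Ω ⊂ C (so g has no pole in Ω) *)
  (forall z, O z -> c * z + d != 0) ->
  mobius a b c d @` O = O ->
  (forall z, O z -> x (mobius a b c d z) = x z) ->
  forall z, O z ->
    derive1 (derive1 x) z != 0 ->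
    derive1 (derive1 x) (mobius a b c d z) != 0 ->
    c * fDS x z + d != 0 /\
    fDS x (mobius a b c d z) = mobius a b c d (fDS x z).
Proof.
move=> oO hx hp _ h wO img inv z Oz qz0 qgz0.
set g := mobius a b c d.
have Og : forall u, O u -> O (g u).
  move=> u Ou; have : (mobius a b c d @` O) (g u) by exists u.
  by rewrite img.
have gder : forall u, O u -> derivable g u 1 /\ derive1 g u = (c*u+d)^-2.
  move=> u Ou; have [H1 H2] := @mob_der R a b c d u h (wO u Ou).
  split; first exact: H1.
  rewrite derive1E; exact: H2.
have nearO : forall u, O u -> \forall v \near u, O v.
  move=> u Ou; exact: (oO u Ou).
have pE : forall u, O u -> derive1 x u = derive1 x (g u) * (c*u+d)^-2.
  move=> u Ou.
  have -> : derive1 x u = derive1 (x \o g) u.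
    rewrite !derive1E; apply: near_eq_derive.
    apply: filterS (nearO u Ou) => v Ov /=; exact: (esym (inv v Ov)).
  have [gd1 gd2] := gder u Ou.
  rewrite (@chainC R g x u gd1 (hx _ (Og u Ou))).
  by rewrite gd2.
have w0 := wO z Oz.
have dp : is_derive z 1 (derive1 x) ('D_1 (derive1 x) z) := DeriveDef (hp z Oz) erefl.
have [Fa Fb] := is_deriveM dp (is_deriveM (@lin_der R c d z) (@lin_der R c d z)).
have near3 : \forall v \near z, (derive1 x \o g) v =
   (derive1 x * ((fun u : CC R => c * u + d) * (fun u : CC R => c * u + d))) v.
  apply: filterS (nearO z Oz) => v Ov /=.
  have wv := wO v Ov.
  change (derive1 x (g v) = derive1 x v * ((c*v+d)*(c*v+d))).
  rewrite (pE v Ov) -mulrA -expr2 mulVf ?mulr1 //.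
  by rewrite expf_neq0.
have gd1 := proj1 (gder z Oz).
have hpg := hp _ (Og z Oz).
have L := (@chainC R g (derive1 x) z gd1 hpg).
have g2 := proj2 (gder z Oz).
have gE : g = mobius a b c d by [].
clearbody g.
rewrite g2 in L.
have E1 : derive1 (derive1 x \o g) z =
  'D_1 (derive1 x * ((fun u : CC R => c * u + d) * (fun u : CC R => c * u + d))) z.
  rewrite derive1E. apply: near_eq_derive. apply: filterS near3 => v ->. reflexivity.
have Q1 : derive1 (derive1 x) (g z) / (c * z + d) ^+ 2 =
   derive1 x z * ((c * z + d) * c + (c * z + d) * c) + ((c * z + d) * (c * z + d)) * derive1 (derive1 x) z.
  apply: (etrans (esym L)). apply: (etrans E1). apply: (etrans Fb).
  have D2 := derive1E (derive1 x) z.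
  rewrite -D2. reflexivity.
  have HP := pE z Oz.
rewrite -gE in qgz0.
rewrite /fDS.
move: HP Q1 qgz0 qz0.
move: (derive1 x z) (derive1 (derive1 x) z) (derive1 x (g z)) (derive1 (derive1 x) (g z)) => P Q P' Q' HP HQ Q'0 Q0.
rewrite gE /mobius.
exact: final_alg.
Qed.
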